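(* Assume $V=L$. Let $i\in T$ and $X\in\mathrm{IPS}_{[\subseteq i]}$. Then every nonempty set $Y\subseteq X$ which is clopen in $X$ (in the relative topology) belongs to $\mathrm{IPS}_{[\subseteq i]}$.
   Context: $T$ is the set of all nonempty finite sequences of countable ordinals, ordered by strict extension $\subset$; $[\subseteq i]=\{j\in T: j\subseteq i\}$. $\Xi$ is the set of all at most countable $\xi\subseteq T$ closed downward under $\subset$ (so $[\subseteq i]\in\Xi$). $D=2^\omega$; $D^\xi$ is the product of $\xi$ copies of $D$. For $\eta\subseteq\xi$ and $x\in D^\xi$, $x\restriction\eta$ is the restriction. For $\zeta\in\Xi$, $\mathrm{IPS}_\zeta$ is the set of all $X\subseteq D^\zeta$ for which there is a homeomorphism $H:D^\zeta\to X$ onto $X$ such that for all $x_0,x_1\in D^\zeta$ and all $\xi\in\Xi$, $\xi\subseteq\zeta$: $x_0\restriction\xi=x_1\restriction\xi\iff H(x_0)\restriction\xi=H(x_1)\restriction\xi$. *)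

(* Defs.v *)
From HB Require Import structures.
From mathcomp Require Import all_boot all_order all_algebra.
From mathcomp Require Import all_classical all_reals all_analysis.
Set Implicit Arguments. Unset Strict Implicit. Unset Printing Implicit Defensive.
Local Open Scope classical_set_scope.

Section Defs.
(* Omega plays the role of omega_1 (the countable ordinals); only the
   sequence structure over it matters, so we allow any type. *)
Variable Omega : Type.

Definition Tseq := {s : seq Omega | s <> [::]}.

Definition tsub_eq (j i : Tseq) : Prop := exists k, sval i = sval j ++ k.
Definition tsub (j i : Tseq) : Prop :=
  exists k, k <> [::] /\ sval i = sval j ++ k.

Definition below (i : Tseq) : set Tseq := [set j | tsub_eq j i].

Definition Xi : set (set Tseq) :=
  [set xi | countable xi /\ (forall i j, tsub j i -> xi i -> xi j)].

Definition D := cantor_space.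
Definition Dpow (zeta : set Tseq) := prod_topology (fun _ : {j | zeta j} => D).

Definition agree_on (zeta xi : set Tseq) (x0 x1 : Dpow zeta) : Prop :=
  forall j (h : zeta j), xi j -> x0 (exist _ j h) = x1 (exist _ j h).

Definition homeo_onto (zeta : set Tseq) (H : Dpow zeta -> Dpow zeta)
  (X : set (Dpow zeta)) : Prop :=
  [/\ continuous H, range H = X, injective H &
      exists G : Dpow zeta -> Dpow zeta,
        {within X, continuous G} /\ (forall x, G (H x) = x)].

Definition IPS (zeta : set Tseq) : set (set (Dpow zeta)) :=
  [set X | exists H : Dpow zeta -> Dpow zeta, homeo_onto H X /\
     (forall (x0 x1 : Dpow zeta) (xi : set Tseq), Xi xi -> xi `<=` zeta ->
        (agree_on xi x0 x1 <-> agree_on xi (H x0) (H x1)))].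

Definition rel_clopen {S : topologicalType} (X Y : set S) : Prop :=
  (exists U, open U /\ Y = X `&` U) /\ (exists F, closed F /\ Y = X `&` F).

End Defs.

(* Main.v *)
Require Import Defs.
From HB Require Import structures.
From mathcomp Require Import all_boot all_order all_algebra.
From mathcomp Require Import all_classical all_reals all_analysis.
From mathcomp Require Import zify.
From Stdlib Require List.
Local Open Scope classical_set_scope.

Module Aux.
Set Implicit Arguments. Unset Strict Implicit.
Lemma prod_cvg_crit (J : Type) (T : topologicalType)
  (F : set_system (prod_topology (fun _ : J => T))) (x : prod_topology (fun _ : J => T)) :
  Filter F ->
  (forall j B, nbhs (x j) B -> F [set y | B (y j)]) -> F --> x.
Proof.
move=> FF h; apply/cvg_sup => j.
move=> A /= [_ [[B Bop <-] Bfs sBfA]].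
apply: filterS sBfA _; apply: h; exact: open_nbhs_nbhs.
Qed.

Definition cylD (M : nat) (z : D) := [set w : D | forall k, (k < M)%N -> w k = z k].

Lemma cylD_filter (z : D) : Filter (filter_from setT (fun M => cylD M z)).
Proof.
apply: filter_from_filter; first by exists 0%N.
move=> a b _ _; exists (maxn a b) => // w hw; split => k hk; apply: hw.
  by apply: leq_trans hk (leq_maxl _ _).
by apply: leq_trans hk (leq_maxr _ _).
Qed.

Lemma nbhsD_cyl (z : D) (B : set D) : nbhs z B -> exists M, cylD M z `<=` B.
Proof.
move=> nB.
have : filter_from setT (fun M => cylD M z) --> z.
  apply: prod_cvg_crit; first exact: cylD_filter.
  move=> k C nC; exists k.+1 => // w hw /=.
  by rewrite hw //; exact: nbhs_singleton.
by move/(_ B nB) => [M _ h]; exists M.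
Qed.

HB.instance Definition _ (I : Type) := Pointed.on (prod_topology (fun _ : I => D)).

Section TopoA.
Variable I : Type.
Local Notation DP := (prod_topology (fun _ : I => D)).

Lemma projc (j : I) : continuous (fun x : DP => x j).
Proof. exact: (@proj_continuous {classic I} (fun _ => D) j). Qed.

Lemma bitc (k : nat) : continuous (fun x : D => x k).
Proof. exact: (@proj_continuous nat (fun _ => bool) k). Qed.

Definition agreeN (M : nat) (x y : DP) := forall j k, (k < M)%N -> x j k = y j k.

Lemma cont_prod (Y : topologicalType) (J : Type) (T : topologicalType)
  (g : Y -> prod_topology (fun _ : J => T)) :
  (forall j, continuous (fun y => g y j)) -> continuous g.
Proof.
move=> hg y; apply/cvg_sup => j.
apply/cvg_image.
  by rewrite eqEsubset; split => // t _; exists (fun _ => t).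
move=> B /= Bn; exists ((fun f : prod_topology (fun _ : J => T) => f j) @^-1` B).
  by apply: (hg j y).
by rewrite image_preimage //; rewrite eqEsubset; split => // t _; exists (fun _ => t).
Qed.


Lemma agreeN_filter (x : DP) : Filter (filter_from setT (fun M => [set y | agreeN M x y])).
Proof.
apply: filter_from_filter; first by exists 0%N.
move=> a b _ _; exists (maxn a b) => // w hw; split => j k hk; apply: hw.
  by apply: leq_trans hk (leq_maxl _ _).
by apply: leq_trans hk (leq_maxr _ _).
Qed.

Lemma nbhs_cyl (x : DP) (B : set DP) : nbhs x B -> exists M, [set y | agreeN M x y] `<=` B.
Proof.
move=> nB.
have : filter_from setT (fun M => [set y | agreeN M x y]) --> x.
  apply: prod_cvg_crit; first exact: agreeN_filter.
  move=> j C /nbhsD_cyl [M hM]; exists M => // w hw /=.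
  by apply: hM => k hk; rewrite hw.
by move/(_ B nB) => [M _ h]; exists M.
Qed.

Lemma cyl_nbhs (l : seq I) (hl : forall j, List.In j l) (M : nat) (x : DP) :
  nbhs x [set y | agreeN M x y].
Proof.
have FF : ProperFilter (@nbhs DP DP x) by exact: nbhs_pfilter.
have key : forall l', nbhs x [set y : DP | forall j, List.In j l' -> forall k, (k < M)%N -> x j k = y j k].
  elim => [|j l' IH]; first by apply: (filterS _ (@filterT _ _ FF)) => y _ j [].
  have hj : forall M', nbhs x [set y : DP | forall k, (k < M')%N -> x j k = y j k].
    elim => [|M' IHM]; first by apply: (filterS _ (@filterT _ _ FF)) => y _ k.
    have h1 : nbhs x [set y : DP | y j M' = x j M'].
      have c : continuous (fun y : DP => y j M').
        by move=> y; exact: (continuous_comp (@projc j y) (@bitc M' (y j))).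
      exact: (c x _ (discrete_set1 _)).
    apply: filterS (filterI IHM h1) => y [h2 h3] k; rewrite ltnS leq_eqVlt.
    by case/orP => [/eqP -> //|]; exact: h2.
  apply: filterS (filterI IH (hj M)) => y [h2 h3] j' /= [<-|]; first exact: h3.
  exact: h2.
by apply: filterS (key l) => y h j k; apply: h.
Qed.


Lemma DP_compact : compact [set: DP].
Proof.
have := @tychonoff {classic I} (fun _ => D) (fun _ => setT) (fun _ => cantor_space_compact).
by congr (compact _); rewrite eqEsubset.
Qed.

Lemma agreeN_trans M x y z : agreeN M x y -> agreeN M y z -> agreeN M x z.
Proof. by move=> h1 h2 j k hk; rewrite h1 // h2. Qed.
Lemma agreeN_sym M x y : agreeN M x y -> agreeN M y x.
Proof. by move=> h1 j k hk; rewrite h1. Qed.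
Lemma agreeN_mono M M' x y : (M' <= M)%N -> agreeN M x y -> agreeN M' x y.
Proof. by move=> hM h j k hk; apply: h; apply: leq_trans hk hM. Qed.

Lemma unif_depth (l : seq I) (hl : forall j, List.In j l) (U : set DP) :
  (forall x : DP, exists2 W, nbhs x W & (W `<=` U \/ W `<=` ~` U)) ->
  exists N, forall x y, agreeN N x y -> U x -> U y.
Proof.
move=> hU.
pose O N := [set x : DP | forall y, agreeN N x y -> (U x <-> U y)].
have Oopen : forall N, open (O N).
  move=> N; rewrite openE => x Ox; rewrite /interior.
  have FF : ProperFilter (@nbhs DP DP x) by exact: nbhs_pfilter.
  suff : @nbhs DP DP x (O N) by [].
  apply: filterS (cyl_nbhs hl N x) => y hy z hz.
  have := Ox z (agreeN_trans hy hz); have := Ox y hy; tauto.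
have Ocov : [set: DP] `<=` cover [set: nat] O.
  move=> x _; have [W nW hW] := hU x; have [M hM] := nbhs_cyl nW.
  exists M => // y hy; have Wx : W x by apply: hM => j k hk.
  have Wy : W y by apply: hM.
  case: hW => hW; first by split => _; apply: hW.
  have nx := hW _ Wx; have ny := hW _ Wy; split => h; exfalso; [exact: nx h | exact: ny h].
have := DP_compact; rewrite (@compact_cover (prod_topology (fun _ : I => D))) => /(_ nat setT O (fun i _ => Oopen i) Ocov).
case=> D' _ hD'.
exists (\max_(i <- finmap.enum_fset D') i)%N => x y hxy Ux.
have [i /= iD Oi] := hD' x Logic.I.
have : agreeN i x y.
  apply: agreeN_mono hxy; exact: (@leq_bigmax_seq nat (finmap.enum_fset D') xpredT id i iD).
by move=> h; exact: (proj1 (Oi y h) Ux).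
Qed.

Lemma local_cont (l : seq I) (hl : forall j, List.In j l) (f : DP -> DP) :
  (forall k, exists M, forall x y, agreeN M x y -> forall j, f x j k = f y j k) ->
  continuous f.
Proof.
move=> hf; apply: cont_prod => j.
apply: (@cont_prod DP nat bool (fun x => f x j)) => k x B nB.
have [M hM] := hf k.
have FF : ProperFilter (@nbhs DP DP x) by exact: nbhs_pfilter.
apply: filterS (cyl_nbhs hl M x) => y hy /=.
rewrite -(hM x y hy j); exact: nbhs_singleton nB.
Qed.

End TopoA.


Lemma find_eq (T : Type) (x0 : T) (P : pred T) (s : seq T) (i : nat) :
  (i <= size s)%N -> (forall k, (k < i)%N -> ~~ P (nth x0 s k)) ->
  ((i < size s)%N -> P (nth x0 s i)) -> find P s = i.
Proof.
elim: s i => [|a s IH] [|i] //=.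
- by move=> _ _ /(_ isT) ->.
- move=> hi hb hl; have := hb 0%N isT => /= /negbTE ->; congr S.
  apply: IH => // k hk; exact: (hb k.+1).
Qed.

Section OneDim.
Variable N : nat.
Local Notation W := (N.-tuple bool).

Definition pre (x : D) : W := @Tuple N bool (mkseq x N) (introT eqP (size_mkseq x N)).
Definition catw (w : W) (r : D) : D :=
  fun k => if (k < N)%N then nth false w k else r (k - N)%N.
Definition w0 : W := pre (fun _ => false).

Lemma nth_pre x k : (k < N)%N -> nth false (pre x) k = x k.
Proof. by move=> hk; rewrite /pre /= nth_mkseq. Qed.

Lemma pre_eq x y : (forall k, (k < N)%N -> x k = y k) -> pre x = pre y.
Proof.
move=> h; apply/eqP; rewrite -val_eqE /=; apply/eqP.
apply: (@eq_from_nth _ false); first by rewrite !size_mkseq.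
by move=> k; rewrite size_mkseq => hk; rewrite !nth_mkseq // h.
Qed.

Lemma pre_eqE x y : pre x = pre y -> forall k, (k < N)%N -> x k = y k.
Proof. by move=> h k hk; rewrite -(nth_pre x hk) -(nth_pre y hk) h. Qed.

Lemma pre_catw w r : pre (catw w r) = w.
Proof.
apply/eqP; rewrite -val_eqE /=; apply/eqP.
apply: (@eq_from_nth _ false); first by rewrite size_mkseq size_tuple.
by move=> k; rewrite size_mkseq => hk; rewrite nth_mkseq // /catw hk.
Qed.

Definition fa (m : nat) (x : D) : nat := find negb (mkseq x m.-1).

Definition phi (s : seq W) (x : D) : D :=
  catw (nth w0 s (fa (size s) x)) (fun k => x (k + minn (fa (size s) x).+1 (size s).-1)%N).

Definition psi (s : seq W) (y : D) : D :=
  fun k => if (k < minn (index (pre y) s).+1 (size s).-1)%N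
           then (k < index (pre y) s)%N
           else y (k - minn (index (pre y) s).+1 (size s).-1 + N)%N.

Lemma fa_le m x : (fa m x <= m.-1)%N.
Proof. by rewrite /fa; have := find_size negb (mkseq x m.-1); rewrite size_mkseq. Qed.

Lemma psi_phi s x : uniq s -> (0 < size s)%N -> psi s (phi s x) = x.
Proof.
move=> us s0.
have ham := fa_le (size s) x.
set a := fa (size s) x in ham *.
have pe : pre (phi s x) = nth w0 s a by rewrite /phi pre_catw.
have ia : index (pre (phi s x)) s = a.
  by rewrite pe index_uniq //; lia.
apply: funext => k; rewrite /psi ia.
case: ifP => hk.
- case: (ltnP k a) => hka.
  + have := before_find false hka; rewrite nth_mkseq; last by lia.
    by move/negbFE => ->.
  + have [m sm] : exists m, size s = m by exists (size s).
    rewrite sm in hk ham; have ek : k = a by lia.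
    have am : (a < (size s).-1)%N by rewrite sm; lia.
    have hh : has negb (mkseq x (size s).-1) by rewrite has_find size_mkseq.
    have hx : ~~ x a.
      have := nth_find false hh; rewrite nth_mkseq; [by [] | exact: am].
    by rewrite ek (negbTE hx).
- rewrite /phi /catw -/a.
  have -> : (k - minn a.+1 (size s).-1 + N < N)%N = false by lia.
  congr x; lia.
Qed.

Lemma phi_psi s y : pre y \in s -> phi s (psi s y) = y.
Proof.
move=> ys.
have [m sm] : exists m, size s = m by exists (size s).
have bm : (index (pre y) s < m)%N by rewrite -sm index_mem.
set b := index (pre y) s in bm.
have fb : fa (size s) (psi s y) = b.
  rewrite /fa /psi -/b !sm.
  apply: (@find_eq _ false); first by rewrite size_mkseq; lia.
    move=> k hk; rewrite nth_mkseq; last by lia.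
    have -> : (k < minn b.+1 m.-1)%N by lia.
    by rewrite hk.
  rewrite size_mkseq => hb; rewrite nth_mkseq //.
  have -> : (b < minn b.+1 m.-1)%N by lia.
  by rewrite ltnn.
apply: funext => k; rewrite /phi fb /catw (nth_index _ ys).
case: ifP => hk; first by rewrite nth_pre.
rewrite /psi -/b !sm.
have -> : (k - N + minn b.+1 m.-1 < minn b.+1 m.-1)%N = false by lia.
congr y; lia.
Qed.

Lemma phi_in s x : (0 < size s)%N -> pre (phi s x) \in s.
Proof.
move=> s0; rewrite /phi pre_catw; apply: mem_nth.
have [m sm] : exists m, size s = m by exists (size s).
move: (fa_le (size s) x) s0; rewrite !sm; lia.
Qed.

Lemma phi_loc s x x' k :
  (forall k', (k' <= k + size s)%N -> x k' = x' k') -> phi s x k = phi s x' k.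
Proof.
move=> h.
have ef : fa (size s) x = fa (size s) x'.
  rewrite /fa; congr find; apply: (@eq_from_nth _ false); first by rewrite !size_mkseq.
  by move=> k'; rewrite size_mkseq => hk; rewrite !nth_mkseq // h //; lia.
rewrite /phi ef /catw; case: ifP => // hk; apply: h.
have [m sm] : exists m, size s = m by exists (size s).
move: (fa_le (size s) x'); rewrite !sm; lia.
Qed.

Lemma psi_loc s y y' k :
  (forall k', (k' <= k + N)%N -> y k' = y' k') -> psi s y k = psi s y' k.
Proof.
move=> h.
have ep : pre y = pre y' by apply: pre_eq => k' hk'; apply: h; lia.
rewrite /psi ep; case: ifP => // _; apply: h; lia.
Qed.

End OneDim.


Section Kcons.
Variables (I : Type) (r : I -> nat) (n N : nat) (U : set (prod_topology (fun _ : I => D))).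
Local Notation DP := (prod_topology (fun _ : I => D)).
Local Notation W := (N.-tuple bool).
Hypothesis rinj : injective r.
Hypothesis rlt : forall j, (r j < n)%N.
Hypothesis detU : forall x y, agreeN N x y -> U x -> U y.
Variable z0 : DP.
Hypothesis Uz0 : U z0.

Definition Sset j (y : DP) (w : W) : Prop :=
  exists z, U z /\ (forall j', (r j' < r j)%N -> forall k, (k < N)%N -> z j' k = y j' k)
            /\ pre N (z j) = w.

Definition slist j (y : DP) : seq W := [seq w <- enum {: W} | `[< Sset j y w >]].

Definition Fx (x y : DP) : DP := fun j => phi (slist j y) (x j).
Definition K (x : DP) : DP := iter n (Fx x) x.
Definition Kinv (y : DP) : DP := fun j => psi (slist j y) (y j).

Lemma slist_loc j y y' :
  (forall j', (r j' < r j)%N -> forall k, (k < N)%N -> y j' k = y' j' k) ->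
  slist j y = slist j y'.
Proof.
move=> h; apply: eq_filter => w; apply: asbool_equiv_eq.
split; move=> [z [Uz [hz pz]]]; exists z; split => //; split => // j' hj' k hk.
  by rewrite hz // h.
by rewrite hz // h.
Qed.

Lemma mem_slist j y w : (w \in slist j y) = `[< Sset j y w >].
Proof. by rewrite mem_filter mem_enum andbT. Qed.

Lemma slist_uniq j y : uniq (slist j y).
Proof. by apply: filter_uniq; apply: enum_uniq. Qed.

Lemma size_slist j y : (size (slist j y) <= #|{: W}|)%N.
Proof. by rewrite size_filter cardE; apply: count_size. Qed.


Lemma iter_indep x k y y' j : (r j < k)%N -> iter k (Fx x) y j = iter k (Fx x) y' j.
Proof.
elim: k y y' j => [//|k IH] y y' j hj.
rewrite !iterS /Fx; congr phi; apply: slist_loc => j' hj' b hb.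
by rewrite (IH y y') //; lia.
Qed.

Lemma K_fix x : K x = Fx x (K x).
Proof.
apply: funext => j; rewrite /K -iterS iterSr.
exact: iter_indep.
Qed.

Lemma fix_tri x x' y y' : y = Fx x y -> y' = Fx x' y' ->
  forall j, (forall j', (r j' <= r j)%N -> x j' = x' j') -> y j = y' j.
Proof.
move=> ey ey'.
suff : forall m j, (r j < m)%N -> (forall j', (r j' <= r j)%N -> x j' = x' j') -> y j = y' j.
  by move=> h j; apply: (h (r j).+1).
elim => [//|m IH] j hj hx.
rewrite ey ey' /Fx.
have -> : slist j y = slist j y'.
  apply: slist_loc => j' hj' k hk.
  have -> : y j' = y' j' by apply: IH => [|j'' h'']; [lia | apply: hx; lia].
  by [].
by rewrite hx.
Qed.

Lemma K_tri x x' j : (forall j', (r j' <= r j)%N -> x j' = x' j') -> K x j = K x' j.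
Proof. exact: (fix_tri (K_fix x) (K_fix x')). Qed.

Lemma K_uniq x y : y = Fx x y -> y = K x.
Proof. by move=> ey; apply: funext => j; apply: (fix_tri ey (K_fix x)). Qed.

Lemma K_adm x k : exists z, U z /\
  (forall j', (r j' < k)%N -> forall b, (b < N)%N -> z j' b = K x j' b).
Proof.
elim: k => [|k [z [Uz hz]]]; first by exists z0.
have [[j rj]|nj] := pselect (exists j, r j = k); last first.
  exists z; split => // j' hj'; apply: hz.
  have : r j' <> k by move=> e; apply: nj; exists j'.
  lia.
have ne : pre N (z j) \in slist j (K x).
  rewrite mem_slist; apply/asboolP; exists z; split => //; split => // j' hj' b hb.
  apply: hz; lia.
have s0 : (0 < size (slist j (K x)))%N by case: (slist j (K x)) ne.
have := phi_in (x j) s0.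
have -> : phi (slist j (K x)) (x j) = K x j by rewrite {2}(K_fix x).
rewrite mem_slist => /asboolP [z' [Uz' [hz' pz']]].
exists z'; split => // j' hj' b hb.
have [hlt|hge] := ltnP (r j') k; first by apply: hz'; lia.
have ej : j' = j by apply: rinj; lia.
by subst j'; apply: pre_eqE pz' b hb.
Qed.

Lemma K_in x : U (K x).
Proof.
have [z [Uz hz]] := K_adm x n.
by apply: (detU _ Uz) => j k hk; apply: hz.
Qed.

Lemma slist_ne x j : (0 < size (slist j (K x)))%N.
Proof.
have [z [Uz hz]] := K_adm x (r j).
have ne : pre N (z j) \in slist j (K x).
  rewrite mem_slist; apply/asboolP; exists z; split => //; split => // j' hj' b hb.
by case: (slist j (K x)) ne.
Qed.

Lemma Kinv_K x : Kinv (K x) = x.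
Proof.
apply: funext => j; rewrite /Kinv.
have -> : K x j = phi (slist j (K x)) (x j) by rewrite {1}(K_fix x).
by rewrite psi_phi //; [exact: slist_uniq | exact: slist_ne].
Qed.

Lemma K_Kinv y : U y -> K (Kinv y) = y.
Proof.
move=> Uy; apply/esym/K_uniq; apply: funext => j; rewrite /Fx /Kinv.
rewrite phi_psi //; rewrite mem_slist; apply/asboolP; exists y; split => //.
Qed.

Lemma Kinv_tri y y' j : (forall j', (r j' <= r j)%N -> y j' = y' j') -> Kinv y j = Kinv y' j.
Proof.
move=> h; rewrite /Kinv; have -> : slist j y = slist j y'.
  apply: slist_loc => j' hj' k hk; rewrite h //; lia.
by rewrite h.
Qed.

Definition cK := (#|{: W}| + N + 1)%N.

Lemma K_loc_pre x x' : agreeN cK x x' -> forall j b, (b < N)%N -> K x j b = K x' j b.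
Proof.
move=> hx.
suff : forall m j, (r j < m)%N -> forall b, (b < N)%N -> K x j b = K x' j b.
  by move=> h j; apply: (h (r j).+1).
elim => [//|m IH] j hj b hb.
rewrite (K_fix x) (K_fix x') /Fx.
have -> : slist j (K x) = slist j (K x').
  apply: slist_loc => j' hj' k hk; apply: IH => //; lia.
apply: phi_loc => k' hk'; apply: hx.
have := size_slist j (K x'); rewrite /cK; lia.
Qed.

Lemma K_loc k : exists M, forall x x', agreeN M x x' -> forall j, K x j k = K x' j k.
Proof.
exists (cK + k)%N => x x' hx j.
rewrite (K_fix x) (K_fix x') /Fx.
have -> : slist j (K x) = slist j (K x').
  apply: slist_loc => j' hj' b hb; apply: K_loc_pre => //.
  by apply: agreeN_mono hx; lia.
apply: phi_loc => k' hk'; apply: hx.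
have := size_slist j (K x'); rewrite /cK; lia.
Qed.

Lemma Kinv_loc k : exists M, forall y y', agreeN M y y' -> forall j, Kinv y j k = Kinv y' j k.
Proof.
exists (k + N + 1)%N => y y' hy j; rewrite /Kinv.
have -> : slist j y = slist j y'.
  apply: slist_loc => j' hj' b hb; apply: hy; lia.
apply: psi_loc => k' hk'; apply: hy; lia.
Qed.

Variable l : seq I.
Hypothesis hl : forall j, List.In j l.

Lemma core : exists (K Kinv : DP -> DP),
  continuous K /\ continuous Kinv /\ (forall x, U (K x)) /\
      (forall x, Kinv (K x) = x) /\ (forall y, U y -> K (Kinv y) = y) /\
      (forall x x' j, (forall j', (r j' <= r j)%N -> x j' = x' j') -> K x j = K x' j) /\
      (forall x x' j, (forall j', (r j' <= r j)%N -> x j' = x' j') -> Kinv x j = Kinv x' j).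
Proof.
exists K, Kinv; split; [|split; [|split; [|split; [|split; [|split]]]]].
- exact: (local_cont hl K_loc).
- exact: (local_cont hl Kinv_loc).
- exact: K_in.
- exact: Kinv_K.
- exact: K_Kinv.
- exact: K_tri.
- exact: Kinv_tri.
Qed.

End Kcons.



Lemma fin_list (I : Type) (r : I -> nat) (n : nat) :
  injective r -> (forall j, (r j < n)%N) -> exists l : seq I, forall j, List.In j l.
Proof.
move=> rinj rlt.
suff : forall m, exists l : seq I, forall j, (r j < m)%N -> List.In j l.
  by move=> /(_ n) [l hl]; exists l => j; apply: hl.
elim => [|m [l hl]]; first by exists [::].
have [[j rj]|nj] := pselect (exists j, r j = m).
  exists (j :: l) => j' hj'; have [h|h] := ltnP (r j') m; first by right; apply: hl.
  by left; apply: rinj; lia.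
exists l => j' hj'; apply: hl.
have : r j' <> m by move=> e; apply: nj; exists j'.
lia.
Qed.

Lemma tseq_eq (Omega : Type) (j j' : Tseq Omega) : sval j = sval j' -> j = j'.
Proof.
case: j j' => [s p] [s' p'] /= e; subst s'.
by rewrite (Prop_irrelevance p p').
Qed.

Lemma below_eq (Omega : Type) (i : Tseq Omega) (j j' : {j | below i j}) :
  sval (sval j) = sval (sval j') -> j = j'.
Proof.
case: j j' => [a p] [a' p'] /= /tseq_eq e; subst a'.
by rewrite (Prop_irrelevance p p').
Qed.

Lemma prefix_of (T : Type) (s s' k k' : seq T) :
  s ++ k = s' ++ k' -> (size s' <= size s)%N -> s = s' ++ drop (size s') s.
Proof.
move=> e hs.
have : take (size s') (s ++ k) = take (size s') (s' ++ k') by rewrite e.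
rewrite takel_cat // take_size_cat // => ht.
by rewrite -{1}(cat_take_drop (size s') s) ht.
Qed.


End Aux.
Import Aux.

Theorem lemma2p17 (Omega : Type) (i : Tseq Omega)
    (X : set (Dpow (below i))) (Y : set (Dpow (below i))) :
  IPS X -> Y !=set0 -> Y `<=` X -> rel_clopen X Y -> IPS Y.
Proof.
move=> [H [ [Hc Hr Hinj [G [Gc GH]]] Hlev]] [y0 Yy0] YX [ [Op [oO YO]] [F [cF YF]]].
pose r (j : {j | below i j}) := size (sval (sval j)).
pose n := (size (sval i)).+1.
have rinj : injective r.
  move=> [[s ps] qs] [[s' ps'] qs']; rewrite /r /= => hsz.
  apply: below_eq => /=.
  case: qs => k /= ek; case: qs' => k' /= ek'.
  by rewrite -(take_size_cat k (erefl (size s))) -ek ek' hsz take_size_cat.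
have rlt : forall j, (r j < n)%N.
  move=> [[s ps] [k /= ek]]; rewrite /r /n /= ek size_cat; lia.
have [l hl] := fin_list rinj rlt.
pose U := H @^-1` Y.
have hU : forall x : Dpow (below i), exists2 W, nbhs x W & (W `<=` U \/ W `<=` ~` U).
  move=> x; have [Ux|nUx] := pselect (U x).
    exists (H @^-1` Op).
      apply: Hc; apply: open_nbhs_nbhs; split => //.
      by have := Ux; rewrite /U /= YO => -[].
    left => w /= Ow; rewrite /U /= YO; split => //.
    by rewrite -Hr; exists w.
  exists (H @^-1` (~` F)).
    apply: Hc; apply: open_nbhs_nbhs; split; first exact: closed_openC.
    move=> FHx; apply: nUx; rewrite /U /= YF; split => //.
    by rewrite -Hr; exists x.
  right => w /= nF Uw; apply: nF; move: Uw; rewrite /U /= YF; by case.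
have [N detU] := unif_depth hl hU.
have [x0 Ux0] : exists x, U x.
  have : X y0 by apply: YX.
  by rewrite -Hr => -[x _ ex]; exists x; rewrite /U /= ex.
have [K [Kinv [Kc [Kic [KU [KiK [KKi [Kt Kit]]]]]]]] := core rinj rlt detU Ux0 hl.
exists (H \o K); split; first split.
- by move=> x; apply: continuous_comp; [exact: Kc | exact: Hc].
- rewrite eqEsubset; split.
    by move=> _ [x _ <-]; exact: KU.
  move=> y Yy; have : X y by apply: YX.
  rewrite -Hr => -[x _ ex]; subst y.
  by exists (Kinv x) => //=; rewrite KKi.
- by move=> a b /(congr1 (Kinv \o G)) /=; rewrite !GH !KiK.
- exists (Kinv \o G); split.
    move=> y; exact: (continuous_comp ((continuous_subspaceW YX Gc) y) (Kic (G y))).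
  by move=> x /=; rewrite GH KiK.
- move=> a b xi Xxi sub; rewrite -Hlev //.
  have dc : forall j j' : {j | below i j}, (r j' <= r j)%N -> xi (sval j) -> xi (sval j').
    move=> [j [k ek]] [j' [k' ek']] /= hr xj.
    rewrite /r /= in hr.
    have ep := prefix_of (etrans (esym ek) ek') hr.
    case hd: (drop (size (sval j')) (sval j)) ep => [|c cs] ep.
      by rewrite cats0 in ep; rewrite -(tseq_eq ep).
    case: Xxi => _ /(_ j j'); apply => //.
    by exists (c :: cs); split.
  have agE : forall f g : Dpow (below i),
      agree_on xi f g <-> (forall j : {j | below i j}, xi (sval j) -> f j = g j).
    move=> f g; split.
      by move=> h [j hj] /= xj; apply: h.
    by move=> h j hj xj; apply: (h (exist _ j hj)).
  rewrite !agE; split.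
    move=> h j xj; apply: Kt => j' hj'; apply: h; exact: dc hj' xj.
  move=> h j xj; rewrite -(KiK a) -(KiK b); apply: Kit => j' hj'; apply: h; exact: dc hj' xj.
Qed.
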